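(* Let $r \in \mathbb{Q}_{>0}$ be such that $S_r$ is atomic. The following are equivalent: (1) $r \in \mathbb{N}$; (2) $\omega(S_r) < \infty$; (3) $S_r$ is globally tame; (4) $S_r$ is locally tame.
   Context: For $q \in \mathbb{Q}_{>0}$, $\mathsf{n}(q),\mathsf{d}(q)$ are the positive coprime integers with $q = \mathsf{n}(q)/\mathsf{d}(q)$. $S_r$ is the additive submonoid of $(\mathbb{Q}_{\ge 0},+)$ generated by $\{r^n : n \in \mathbb{N}_0\}$; it is atomic exactly when $r=1$ or $\mathsf{n}(r)>1$. For $x,y \in S_r$, $x \mid_{S_r} y$ means $y = x + w$ for some $w \in S_r$. Omega function: for $x \ne 0$, $\omega(x)$ is the smallest $n \in \mathbb{N}$ such that whenever $x \mid_{S_r} a_1 + \dots + a_t$ for atoms $a_i$, there is $T \subseteq \{1,\dots,t\}$ with $|T| \le n$ and $x \mid_{S_r} \sum_{i \in T} a_i$ (and $\omega(x) = \infty$ if none exists); $\omega(S_r) = \sup\{\omega(a) : a \text{ an atom}\}$. Factorizations are elements of the free commutative monoid $\mathsf{Z}(S_r)$ on the atoms; $\mathsf{Z}(x)$ is the set of factorizations of $x$, $|z|$ is the length. For $z = \sum_a \mu_a a$, $z' = \sum_a \nu_a a$, $\gcd(z,z') = \sum_a \min\{\mu_a,\nu_a\}a$ and $\mathsf{d}(z,z') = \max\{|z|-|\gcd(z,z')|, |z'|-|\gcd(z,z')|\}$. For an atom $a$, the local tame degree $\mathsf{t}(a)$ is the smallest $n \in \mathbb{N}_0 \cup \{\infty\}$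 such that for every $x \in S_r$ with $a \mid_{S_r} x$ and every $z \in \mathsf{Z}(x)$ there exists $z' \in \mathsf{Z}(x)$ containing $a$ with $\mathsf{d}(z,z') \le n$. $S_r$ is locally tame if $\mathsf{t}(a) < \infty$ for every atom $a$, and globally tame if $\mathsf{t}(S_r) = \sup_a \mathsf{t}(a) < \infty$. *)

(* Defs.v *)
From HB Require Import structures.
From mathcomp Require Import all_boot all_order all_algebra.
Set Implicit Arguments. Unset Strict Implicit. Unset Printing Implicit Defensive.
Import Order.TTheory GRing.Theory Num.Theory.
Local Open Scope ring_scope.

Definition inS (r x : rat) : Prop :=
  exists c : seq nat, x = \sum_(i < size c) (nth 0%N c i)%:R * r ^+ i.

Definition dvdS (r x y : rat) : Prop :=
  inS r x /\ inS r y /\ exists w, inS r w /\ y = x + w.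

(* atoms of S_r (the only unit of S_r is 0) *)
Definition is_atom (r a : rat) : Prop :=
  inS r a /\ a <> 0 /\
  forall b c, inS r b -> inS r c -> a = b + c -> b = 0 \/ c = 0.

(* z (a finite multiset of atoms, represented by a sequence up to order)
   is a factorization of x *)
Definition is_fact (r x : rat) (z : seq rat) : Prop :=
  (forall a, a \in z -> is_atom r a) /\ x = \sum_(a <- z) a.

Definition atomic (r : rat) : Prop :=
  forall x, inS r x -> x <> 0 -> exists z, is_fact r x z.

Definition omega_le (r x : rat) (n : nat) : Prop :=
  forall s : seq rat, (forall a, a \in s -> is_atom r a) ->
    dvdS r x (\sum_(a <- s) a) ->
    exists s', subseq s' s /\ (size s' <= n)%N /\ dvdS r x (\sum_(a <- s') a).

Definition omega_Sr_finite (r : rat) : Prop :=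
  exists N : nat, forall a, is_atom r a -> omega_le r a N.

Definition gcd_len (z z' : seq rat) : nat :=
  (\sum_(a <- undup z) minn (count_mem a z) (count_mem a z'))%N.

Definition fdist (z z' : seq rat) : nat :=
  maxn (size z - gcd_len z z') (size z' - gcd_len z z').

Definition tame_le (r a : rat) (n : nat) : Prop :=
  forall x, inS r x -> dvdS r a x ->
  forall z, is_fact r x z ->
  exists z', [/\ is_fact r x z', a \in z' & (fdist z z' <= n)%N].

Definition locally_tame (r : rat) : Prop :=
  forall a, is_atom r a -> exists n, tame_le r a n.

Definition globally_tame (r : rat) : Prop :=
  exists n : nat, forall a, is_atom r a -> tame_le r a n.

(* Main.v *)
Require Import Defs.
From HB Require Import structures.
From mathcomp Require Import all_boot all_order all_algebra.
From mathcomp Require Import ring lra zify.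
From Stdlib Require Import Classical_Prop.
Import Order.TTheory GRing.Theory Num.Theory.
Local Open Scope ring_scope.

Definition val (r : rat) (c : seq nat) : rat :=
  \sum_(i < size c) (nth 0%N c i)%:R * r ^+ i.

Lemma val_nil (r : rat) : val r [::] = 0.
Proof. by rewrite /val big_ord0. Qed.

Lemma val_cons (r : rat) x c : val r (x :: c) = x%:R + r * val r c.
Proof.
rewrite /val big_ord_recl /= expr0 mulr1; congr (_ + _).
rewrite big_distrr; apply: eq_bigr => i _ /=.
by rewrite exprS mulrCA.
Qed.

Fixpoint addseq (c d : seq nat) : seq nat :=
  match c, d with
  | [::], _ => d
  | _, [::] => c
  | x :: c', y :: d' => (x + y)%N :: addseq c' d'
  end.

Lemma val_add (r : rat) c d : val r (addseq c d) = val r c + val r d.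
Proof.
elim: c d => [|x c IH] [|y d] /=; rewrite ?val_nil ?add0r ?addr0 //.
by rewrite !val_cons IH natrD mulrDr; ring.
Qed.

Lemma sumn_add c d : sumn (addseq c d) = (sumn c + sumn d)%N.
Proof. elim: c d => [|x c IH] [|y d] //=; [by rewrite addn0 | rewrite IH; lia]. Qed.

Lemma head_add c d : head 0%N (addseq c d) = (head 0%N c + head 0%N d)%N.
Proof. by case: c d => [|x c] [|y d] //=; rewrite addn0. Qed.

Definition mono (i m : nat) : seq nat := nseq i 0%N ++ [:: m].

Lemma val_mono (r : rat) i m : val r (mono i m) = m%:R * r ^+ i.
Proof.
elim: i => [|i IH]; first by rewrite /mono /= val_cons val_nil mulr0 addr0 expr0 mulr1.
by rewrite /mono /= val_cons -/(mono i m) IH add0r exprS; ring.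
Qed.

Lemma sumn_mono i m : sumn (mono i m) = m.
Proof. by rewrite /mono sumn_cat sumn_nseq /=; lia. Qed.

Lemma val_ge0 {r : rat} c : 0 <= r -> 0 <= val r c.
Proof.
move=> hr; elim: c => [|x c IH]; first by rewrite val_nil.
by rewrite val_cons addr_ge0 ?ler0n ?mulr_ge0.
Qed.

Lemma val_eq0 (r : rat) c : 0 < r -> val r c = 0 -> sumn c = 0%N.
Proof.
move=> hr; elim: c => [|x c IH] //; rewrite val_cons => h.
have h1 := val_ge0 (r:=r) c (ltW hr).
have h2 : 0 <= r * val r c by rewrite mulr_ge0 // ltW.
have hx : (x%:R : rat) = 0 by apply/le_anti; rewrite ler0n andbT -h lerDl.
have : r * val r c = 0 by rewrite -h hx add0r.
move/eqP; rewrite mulf_eq0 (gt_eqF hr) /= => /eqP /IH ->.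
by move: hx => /eqP; rewrite pnatr_eq0 => /eqP ->.
Qed.

Lemma sumn0_val (r : rat) c : sumn c = 0%N -> val r c = 0.
Proof.
elim: c => [|x c IH]; first by rewrite val_nil.
move=> /= /eqP; rewrite addn_eq0 => /andP [/eqP -> /eqP /IH].
by rewrite val_cons => ->; rewrite mulr0 addr0.
Qed.

Lemma val_rcons (r : rat) c x : val r (rcons c x) = val r c + x%:R * r ^+ size c.
Proof.
elim: c => [|y c IH] /=; first by rewrite val_cons !val_nil expr0 /=; ring.
by rewrite !val_cons IH exprS; ring.
Qed.

Lemma val_rev (r : rat) c : r != 0 -> r ^+ size c * val r^-1 (rev c) = r * val r c.
Proof.
move=> hr; elim: c => [|x c IH]; first by rewrite /rev /= !val_nil !mulr0.
rewrite rev_cons val_rcons size_rev /= val_cons exprS mulrDr -mulrA IH.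
rewrite exprVn.
have h1 : r ^+ size c * r ^- size c = 1 by rewrite mulfV // expf_neq0.
rewrite -mulrA (mulrCA (r ^+ size c)) mulrA h1 mulr1 mulrDr; ring.
Qed.

Lemma val_pad (r : rat) c m : val r (c ++ nseq m 0%N) = val r c.
Proof.
elim: c => [|x c IH] /=; last by rewrite !val_cons IH.
by rewrite sumn0_val ?val_nil // sumn_nseq mul0n.
Qed.

Fixpoint Dn (A B : nat) (c : seq nat) : nat :=
  match c with [::] => 0%N | x :: c' => (x * B ^ size c + A * Dn A B c')%N end.

Lemma Dn_val A B c : (0 < B)%N ->
  (Dn A B c)%:R = (B%:R) ^+ (size c) * val (A%:R / B%:R) c.
Proof.
move=> hB; elim: c => [|x c IH] /=; first by rewrite val_nil mulr0.
rewrite val_cons natrD !natrM IH natrX exprS.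
have hB0 : (B%:R : rat) != 0 by rewrite pnatr_eq0 -lt0n.
by field.
Qed.

Lemma natr_inj_rat (m n : nat) : (m%:R : rat) = n%:R -> m = n.
Proof. by move/eqP; rewrite eqr_nat => /eqP. Qed.

Lemma modA A B x c k m : (0 < B)%N -> coprime A B ->
  val (A%:R / B%:R) (x :: c) * (B%:R) ^+ k = (m * A)%:R -> (A %| x)%N.
Proof.
move=> hB hco h.
set n := size (x :: c).
have e : ((x * B ^ n + A * Dn A B c) * B ^ k)%N = (m * A * B ^ n)%N.
  apply: natr_inj_rat.
  rewrite natrM (_ : (x * B ^ n + A * Dn A B c)%N = Dn A B (x :: c)) //.
  rewrite Dn_val // natrM natrX -h natrX /n; ring.
have h2 : (A %| x * B ^ (n + k))%N.
  have e2 : (A * (Dn A B c * B ^ k) + x * B ^ (n + k))%N = (A * (m * B ^ n))%N.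
    rewrite expnD (_ : (A * (m * B ^ n))%N = (m * A * B ^ n)%N); last ring.
    rewrite -e; ring.
  by rewrite -(dvdn_addr _ (dvdn_mulr (Dn A B c * B ^ k) (dvdnn A))) e2 dvdn_mulr.
by move: h2; rewrite Gauss_dvdl // coprimeXr.
Qed.

Lemma rpos A B : (0 < A)%N -> (0 < B)%N -> 0 < (A%:R / B%:R : rat).
Proof. by move=> hA hB; rewrite divr_gt0 // ltr0n. Qed.

Lemma val_ge_head (r : rat) x c : 0 <= r -> (x%:R : rat) <= val r (x :: c).
Proof. by move=> hr; rewrite val_cons lerDl mulr_ge0 // val_ge0. Qed.

Lemma rpowB A B k : (0 < B)%N ->
  (A%:R / B%:R : rat) ^+ k * (B%:R) ^+ k = (A ^ k)%:R.
Proof.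
move=> hB; have hB0 : (B%:R : rat) != 0 by rewrite pnatr_eq0 -lt0n.
by rewrite -exprMn natrX divfK.
Qed.

Lemma rep_pow_lt A B : (2 <= A)%N -> (A < B)%N -> coprime A B ->
  forall k c, val (A%:R / B%:R) c = (A%:R / B%:R) ^+ k -> sumn c = 1%N.
Proof.
move=> hA hAB hco.
have hB : (0 < B)%N by lia.
have hB0 : (B%:R : rat) != 0 by rewrite pnatr_eq0 -lt0n.
set r := (A%:R / B%:R : rat).
have r0 : 0 < r by apply: rpos; lia.
have r1 : r < 1 by rewrite /r ltr_pdivrMr ?ltr0n // mul1r ltr_nat.
elim=> [|k IH] [|x c].
- by rewrite val_nil expr0 => /eqP; rewrite eq_sym oner_eq0.
- rewrite expr0 => h.
  case: x h => [|x] h.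
    have e := Dn_val A B c hB.
    have e2 : (A * Dn A B c)%N = (B ^ (size c).+1)%N.
      apply: natr_inj_rat; rewrite natrM e natrX exprS.
      move: h; rewrite val_cons add0r /r => h.
      have : val r c = B%:R / A%:R.
        apply: (mulfI (x := r)); first by rewrite gt_eqF.
        by rewrite h /r; field; rewrite hB0 andbT pnatr_eq0; lia.
      move=> ->; rewrite /r; field; rewrite pnatr_eq0; lia.
    have : (A %| 1 * B ^ (size c).+1)%N by rewrite mul1n -e2 dvdn_mulr.
    rewrite Gauss_dvdl ?coprimeXr // dvdn1; lia.
  have hv : 0 <= r * val r c by rewrite mulr_ge0 ?val_ge0 // ltW.
  move: h; rewrite val_cons => h.
  have hx : (x.+1%:R : rat) <= 1 by lra.
  have hx1 : x = 0%N by move: hx; rewrite -[1]/(1%:R) ler_nat; lia.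
  subst x.
  have : r * val r c = 0 by move: h; rewrite -[RHS](addr0 1); move/addrI.
  move/eqP; rewrite mulf_eq0 gt_eqF //= => /eqP /val_eq0 -> //.
- by rewrite val_nil => /eqP; rewrite eq_sym expf_eq0 gt_eqF.
- move=> h.
  have hd : (A %| x)%N.
    apply: (modA A B x c k.+1 (A ^ k)%N hB hco).
    by rewrite h rpowB // expnS mulnC.
  case: x hd h => [|x] hd h.
    move: h; rewrite val_cons add0r exprS => /(mulfI (lt0r_neq0 r0)) /IH /= ->.
    by [].
  have : (A%:R : rat) <= 1.
    apply: (le_trans (y := (x.+1)%:R)); first by rewrite ler_nat dvdn_leq.
    rewrite (le_trans (val_ge_head r x.+1 c (ltW r0))) // h.
    by rewrite exprn_ile1 // ltW.
  rewrite -[1]/(1%:R) ler_nat; lia.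
Qed.

Lemma rep_pow A B : (2 <= A)%N -> (2 <= B)%N -> coprime A B ->
  forall k c, val (A%:R / B%:R) c = (A%:R / B%:R) ^+ k -> sumn c = 1%N.
Proof.
move=> hA hB hco k c h.
have [hAB|hBA|hAB] := ltngtP A B; first exact: rep_pow_lt A B hA hAB hco k c h.
- set r := (A%:R / B%:R : rat) in h.
  have r0 : 0 < r by apply: rpos; lia.
  set c2 := c ++ nseq k.+1 0%N.
  have hc2 : val r c2 = r ^+ k by rewrite val_pad.
  have hn : (k.+1 <= size c2)%N by rewrite size_cat size_nseq; lia.
  have e := val_rev r c2 (lt0r_neq0 r0).
  rewrite hc2 -exprS -(subnK hn) exprD -mulrA in e.
  have e2 : r ^+ (size c2 - k.+1) * val r^-1 (rev c2) = 1.
    apply: (mulIf (expf_neq0 k.+1 (lt0r_neq0 r0))).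
    by rewrite mul1r -[RHS]e; ring.
  have e3 : val r^-1 (rev c2) = (B%:R / A%:R) ^+ (size c2 - k.+1).
    rewrite -invf_div exprVn.
    apply: (mulfI (expf_neq0 (size c2 - k.+1) (lt0r_neq0 r0))).
    by rewrite e2 mulfV // expf_neq0 // lt0r_neq0.
  move: e3; rewrite invf_div => /(rep_pow_lt B A hB hBA).
  rewrite sumn_rev /c2 sumn_cat sumn_nseq mul0n addn0; apply => //.
  by rewrite coprime_sym.
- by move: hco; rewrite hAB /coprime gcdnn; lia.
Qed.

Lemma inS_val (r : rat) c : inS r (val r c).
Proof. by exists c. Qed.

Lemma inS_ex (r x : rat) : inS r x -> exists c, x = val r c.
Proof. by []. Qed.

Lemma atom_pow A B k : (2 <= A)%N -> (2 <= B)%N -> coprime A B ->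
  is_atom (A%:R / B%:R) ((A%:R / B%:R) ^+ k).
Proof.
move=> hA hB hco.
set r := (A%:R / B%:R : rat).
have r0 : 0 < r by apply: rpos; lia.
split.
  by rewrite (_ : r ^+ k = val r (mono k 1)); [exact: inS_val | rewrite val_mono mul1r].
split; first by apply/eqP; rewrite expf_neq0 // lt0r_neq0.
move=> b c /inS_ex [cb ->] /inS_ex [cc ->] e.
have := rep_pow A B hA hB hco k (addseq cb cc).
rewrite val_add -e sumn_add => /(_ erefl) hs.
have hb := sumn0_val r cb; have hc := sumn0_val r cc.
case: (sumn cb) hb hs => [|[|//]] hb hs; first by left; apply: hb.
by right; apply: hc; lia.
Qed.

Lemma split_seq c : (0 < sumn c)%N -> exists i c', c = addseq (mono i 1) c'.
Proof.
elim: c => [|x c IH] //= h.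
case: x h => [|x] h.
  have [i [c' ->]] := IH h.
  by exists i.+1, (0%N :: c').
by exists 0%N, (x :: c); rewrite /mono /=; case: c {IH h}.
Qed.

Lemma atom_pos (r : rat) a : 0 <= r -> is_atom r a -> 0 < a.
Proof.
move=> hr [/inS_ex [c ->] [h0 _]].
by rewrite lt0r val_ge0 // andbT; apply/eqP.
Qed.

Lemma atom_is_pow (r : rat) u : 0 < r -> is_atom r u -> exists i, u = r ^+ i.
Proof.
move=> hr [hu [h0 hd]].
move: (hu) => /inS_ex [c hc].
have : (0 < sumn c)%N.
  rewrite lt0n; apply/eqP => /(sumn0_val r); by rewrite -hc.
move=> /split_seq [i [c' hc']].
exists i.
have e : u = r ^+ i + val r c' by rewrite hc hc' val_add val_mono mul1r.
case: (hd _ _ _ (inS_val r c') e).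
- by rewrite (_ : r ^+ i = val r (mono i 1)); [exact: inS_val | rewrite val_mono mul1r].
- by move/eqP; rewrite expf_eq0 (gt_eqF hr) andbF.
- by move=> h; rewrite e h addr0.
Qed.

Lemma fact_rep (r : rat) z : 0 < r -> r != 1 -> (forall a, a \in z -> is_atom r a) ->
  exists d, [/\ val r d = \sum_(a <- z) a, sumn d = size z &
               (1 \in z -> (1 <= head 0%N d)%N)].
Proof.
move=> hr hr1; elim: z => [|y z IH] hz.
  by exists [::]; rewrite big_nil val_nil.
have [d [h1 h2 h3]] : exists d, [/\ val r d = \sum_(a <- z) a, sumn d = size z &
               (1 \in z -> (1 <= head 0%N d)%N)].
  by apply: IH => a ha; apply: hz; rewrite inE ha orbT.
have [i hi] := atom_is_pow r y hr (hz y (mem_head _ _)).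
exists (addseq (mono i 1) d); split.
- by rewrite val_add val_mono mul1r big_cons h1 hi.
- by rewrite sumn_add sumn_mono h2.
- rewrite inE head_add => /orP [/eqP hy|hz1]; last by have := h3 hz1; lia.
  have hi0 : i = 0%N.
    case: i hi => // i hi.
    have : r ^+ i.+1 == 1 by rewrite -hi hy.
    by rewrite pexpr_eq1 // ?ltW // (negPf hr1).
  by rewrite hi0.
Qed.

Lemma val_hb (r : rat) d t :
  val r ((head 0%N d + t)%N :: behead d) = val r d + t%:R.
Proof.
case: d => [|y d] /=; first by rewrite val_cons !val_nil mulr0 !add0r addr0.
by rewrite !val_cons natrD; ring.
Qed.

Lemma sumn_hb d t : sumn ((head 0%N d + t)%N :: behead d) = (sumn d + t)%N.
Proof. case: d => [|y d] /=; lia. Qed.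

Lemma len_bound A B : (0 < B)%N -> (B < A)%N -> coprime A B ->
  forall k d, val (A%:R / B%:R) d = B%:R * (A%:R / B%:R) ^+ k.+1 ->
  (1 <= head 0%N d)%N -> (k.+1 <= sumn d)%N.
Proof.
move=> hB hBA hco.
have hB0 : (B%:R : rat) != 0 by rewrite pnatr_eq0 -lt0n.
set r := (A%:R / B%:R : rat).
have r0 : 0 < r by apply: rpos; lia.
have rB : r * B%:R = A%:R by rewrite /r divfK.
elim=> [|k IH] [|x d] //=; first by lia.
move=> h hx.
have hd : (A %| x)%N.
  apply: (modA A B x d k.+1 (A ^ k.+1)%N hB hco).
  by rewrite h (mulrC B%:R) -mulrA -exprS rpowB // expnSr.
set m := (x %/ A)%N.
have hxm : x = (m * A)%N by rewrite divnK.
have hm : (1 <= m)%N by move: hx; rewrite hxm; case: (m) => //=.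
set e := (head 0%N d + m * B)%N :: behead d.
have he : val r e = B%:R * r ^+ k.+1.
  apply: (mulfI (lt0r_neq0 r0)).
  rewrite /e val_hb mulrDr (_ : r * (m * B)%:R = x%:R); last first.
    by rewrite hxm !natrM -rB; ring.
  rewrite [RHS]mulrCA -exprS -h val_cons; ring.
have h1 : (1 <= head 0%N e)%N by rewrite /=; nia.
have := IH e he h1; rewrite sumn_hb hxm.
nia.
Qed.

Lemma sum_nseq (n : nat) (x : rat) : \sum_(a <- nseq n x) a = n%:R * x.
Proof.
elim: n => [|n IH]; first by rewrite big_nil mul0r.
by rewrite /= big_cons IH -add1n natrD mulrDl mul1r.
Qed.

Lemma undup_nseqS (x : rat) m : undup (nseq m.+1 x) = [:: x].
Proof.
elim: m => [|m IH] //=.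
by rewrite inE eqxx /=; move: IH => /=.
Qed.

Lemma gcd_len_nseq (e : rat) m z : gcd_len (nseq m.+1 e) z = minn m.+1 (count_mem e z).
Proof.
by rewrite /gcd_len undup_nseqS big_seq1 count_nseq /= eqxx mul1n.
Qed.

Lemma sum_count_ge (z : seq rat) e : (forall a, a \in z -> 0 <= a) -> 0 <= e ->
  (count_mem e z)%:R * e <= \sum_(a <- z) a.
Proof.
move=> hz he; elim: z hz => [|y z IH] hz; first by rewrite big_nil mul0r.
have hz' : forall a, a \in z -> 0 <= a by move=> a ha; apply: hz; rewrite inE ha orbT.
have hy : 0 <= y by apply: hz; rewrite mem_head.
rewrite big_cons /= natrD mulrDl.
case: eqP => [->|_]; first by rewrite mul1r lerD2l IH.
by rewrite mul0r add0r (le_trans (IH hz')) // lerDr.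
Qed.

Lemma sum_count_ge2 (z : seq rat) e a0 : (forall a, a \in z -> 0 <= a) -> 0 <= e ->
  a0 \in z -> a0 != e ->
  (count_mem e z)%:R * e + a0 <= \sum_(a <- z) a.
Proof.
move=> hz he; elim: z hz => [|y z IH] hz //.
have hz' : forall a, a \in z -> 0 <= a by move=> a ha; apply: hz; rewrite inE ha orbT.
have hy : 0 <= y by apply: hz; rewrite mem_head.
rewrite inE big_cons /= natrD mulrDl => /orP [/eqP <-|ha] hne.
  by rewrite (negPf hne) mul0r add0r addrC lerD2l sum_count_ge.
have := IH hz' ha hne.
case: eqP => [->|_] h; first by rewrite mul1r -addrA lerD2l.
by rewrite mul0r add0r (le_trans h) // lerDr.
Qed.

Lemma bern (q : rat) (M : nat) : (0 < M)%N -> 1 + M%:R^-1 <= q ->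
  forall n : nat, 1 + n%:R / M%:R <= q ^+ n.
Proof.
move=> hM hq.
have hM0 : 0 < (M%:R : rat) by rewrite ltr0n.
have hi : 0 <= (M%:R : rat)^-1 by rewrite invr_ge0 ltW.
elim=> [|n IH]; first by rewrite mul0r addr0 expr0.
rewrite exprS.
have hn : 0 <= n%:R / (M%:R : rat) by rewrite divr_ge0 // ltW.
apply: (le_trans (y := (1 + M%:R^-1) * (1 + n%:R / M%:R))).
  rewrite -add1n natrD mulrDl mul1r; nra.
apply: ler_pM => //; first by rewrite addr_ge0.
by rewrite addr_ge0.
Qed.

Lemma subseq_nseq (s : seq rat) x n : subseq s (nseq n x) -> s = nseq (size s) x.
Proof.
move=> hs; apply/all_pred1P/allP => y hy.
by have := mem_subseq hs hy; rewrite mem_nseq => /andP [_].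
Qed.

Lemma gcd_len_nseq' (e : rat) m z : gcd_len (nseq m e) z = minn m (count_mem e z).
Proof. by case: m => [|m]; [rewrite /gcd_len /= big_nil min0n | apply: gcd_len_nseq]. Qed.

Lemma inS_nat (r : rat) (m : nat) : inS r m%:R.
Proof. by exists [:: m]; rewrite -/(val r [:: m]) val_cons val_nil mulr0 addr0. Qed.

Lemma inS0 (r : rat) : inS r 0.
Proof. by exists [::]; rewrite big_ord0. Qed.

Lemma dvdS_le {r x y : rat} : 0 <= r -> dvdS r x y -> x <= y.
Proof.
move=> hr [_ [_ [w [/inS_ex [c ->] ->]]]].
by rewrite lerDl val_ge0.
Qed.

Lemma int_val (n : nat) c : exists m : nat, val n%:R c = m%:R.
Proof.
elim: c => [|x c [m IH]]; first by exists 0%N; rewrite val_nil.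
by exists (x + n * m)%N; rewrite val_cons IH natrD natrM.
Qed.

Lemma int_atom (n : nat) u : is_atom n%:R u -> u = 1.
Proof.
move=> [/inS_ex [c hc] [h0 hd]].
have [m hm] := int_val n c.
rewrite hc hm in h0 hd *.
case: m hm h0 hd => [|[|m]] hm h0 hd //.
have : (m.+2%:R : rat) = 1 + m.+1%:R by rewrite -natr1 addrC -[in RHS]natr1; ring.
move=> /(hd _ _ (inS_nat _ 1) (inS_nat _ m.+1)) [] /eqP.
- by rewrite oner_eq0.
- by rewrite pnatr_eq0.
Qed.

Lemma int_omega (r : rat) : 0 < r -> (exists n : nat, r = n%:R) -> omega_Sr_finite r.
Proof.
move=> hr [n hn]; exists 1%N => a ha s hs hd.
have ha1 : a = 1 by rewrite hn in ha; apply: int_atom ha.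
have hs1 : s = nseq (size s) 1.
  apply/all_pred1P/allP => y hy; apply/eqP.
  by have := hs y hy; rewrite hn => /int_atom.
have := dvdS_le (ltW hr) hd.
rewrite hs1 sum_nseq ha1 mulr1.
case: s hs1 {hs hd} => [|y t] hs1; first by rewrite ler10.
move=> _; exists [:: y]; split; first by rewrite -hs1 sub1seq mem_head.
split => //.
move: hs1 => [->]; rewrite big_seq1.
split; first exact: (inS_nat r 1).
split; first exact: (inS_nat r 1).
by exists 0; split; [exact: inS0 | rewrite addr0].
Qed.

Lemma int_tame (r : rat) : 0 < r -> (exists n : nat, r = n%:R) -> globally_tame r.
Proof.
move=> hr [n hn]; exists 0%N => a ha x hx hd z [hz hxz].
have ha1 : a = 1 by rewrite hn in ha; apply: int_atom ha.
have hz1 : z = nseq (size z) 1.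
  apply/all_pred1P/allP => y hy; apply/eqP.
  by have := hz y hy; rewrite hn => /int_atom.
exists z; split => //.
  have := dvdS_le (ltW hr) hd.
  rewrite ha1 hxz hz1 sum_nseq mulr1.
  by case: (size z) => [|m]; [rewrite ler10 | rewrite mem_nseq eqxx].
rewrite /fdist; set m := size z in hz1 *; rewrite hz1 gcd_len_nseq' count_nseq /= mul1n minnn subnn.
by rewrite maxnn.
Qed.

Lemma val_scale (r : rat) m c : val r (map (muln m) c) = m%:R * val r c.
Proof.
elim: c => [|x c IH] /=; first by rewrite !val_nil mulr0.
by rewrite !val_cons IH natrM; ring.
Qed.

Lemma no_atoms (B : nat) u : (2 <= B)%N -> ~ is_atom (1 / B%:R) u.
Proof.
move=> hB [/inS_ex [c hc] [h0 hd]].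
set r := (1 / B%:R : rat) in hc h0 hd.
have hB0 : (B%:R : rat) != 0 by rewrite pnatr_eq0; lia.
have e : u = val r (0%N :: c) + val r (0%N :: map (muln B.-1) c).
  have hB1 : (B.-1%:R : rat) = B%:R - 1.
    rewrite -[in RHS](prednK (_ : 0 < B)%N); last lia.
    by rewrite -natr1 addrK.
  by rewrite !val_cons val_scale !add0r hc hB1 /r; field.
have r0 : r != 0 by rewrite /r mul1r invr_eq0.
case: (hd _ _ (inS_val r _) (inS_val r _) e) => /eqP; rewrite val_cons add0r mulf_eq0 (negPf r0) /=.
- by rewrite -hc => /eqP.
- rewrite val_scale mulf_eq0 pnatr_eq0 -hc (_ : (B.-1 == 0)%N = false) /=.
    by move/eqP.
  by apply/eqP; lia.
Qed.

Lemma nonint_setup (r : rat) : 0 < r -> atomic r -> ~ (exists n : nat, r = n%:R) ->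
  exists A B : nat, [/\ r = A%:R / B%:R, (2 <= A)%N, (2 <= B)%N & coprime A B].
Proof.
move=> hr hat hn.
set A := `|numq r|%N; set B := `|denq r|%N.
have eA : numq r = A%:Z by rewrite /A gez0_abs // ltW // numq_gt0.
have eB : denq r = B%:Z by rewrite /B gez0_abs // ltW // denq_gt0.
have er : r = A%:R / B%:R by rewrite -[LHS]divq_num_den eA eB.
have hco : coprime A B by apply: coprime_num_den.
have hA0 : (0 < A)%N by rewrite /A absz_gt0 gt_eqF // numq_gt0.
have hB0 : (0 < B)%N by rewrite /B absz_gt0 gt_eqF // denq_gt0.
have hB : (2 <= B)%N.
  clearbody A B; clear eB.
  case: B hB0 er hco => [|[|B]] // _ er _.
  by case: hn; exists A; rewrite er divr1.
have hA : (2 <= A)%N.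
  clearbody A; clear eA.
  case: A hA0 er hco => [|[|A]] // _ er _.
  have : inS r 1 by apply: (inS_nat r 1).
  move=> /hat [] => [|z [hz hzs]]; first by apply/eqP; rewrite oner_eq0.
  case: z hz hzs => [|y z] hz; first by rewrite big_nil => /eqP; rewrite oner_eq0.
  have e1 : ((1%N)%:R : rat) = 1 by [].
  by have := hz y (mem_head _ _); rewrite er e1 => /(no_atoms B y hB).
by exists A, B.
Qed.

Lemma inS_mono (r : rat) k m : inS r (m%:R * r ^+ k).
Proof. by rewrite -val_mono; apply: inS_val. Qed.

Lemma inS_pow (r : rat) k : inS r (r ^+ k).
Proof. by rewrite -[_ ^+ k]mul1r -[1]/(1%:R); apply: inS_mono. Qed.

Lemma natr_pred (m : nat) : (0 < m)%N -> 1 + (m - 1)%:R = m%:R :> rat.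
Proof. by move=> hm; rewrite -[1]/(1%:R) -natrD; congr (_%:R); lia. Qed.

Lemma big_ge (q : rat) (M N : nat) : (0 < M)%N -> 1 + M%:R^-1 <= q ->
  N%:R < q ^+ (N * M).+1.
Proof.
move=> hM hq; have := bern q M hM hq (N * M).+1.
have hM0 : (M%:R : rat) != 0 by rewrite pnatr_eq0; lia.
rewrite -natr1 natrM mulrDl mulfK // => h; apply: lt_le_trans h.
have : 0 < (M%:R : rat)^-1 by rewrite invr_gt0 ltr0n.
lra.
Qed.

Lemma nonint_omega A B : (2 <= A)%N -> (2 <= B)%N -> coprime A B ->
  ~ omega_Sr_finite (A%:R / B%:R).
Proof.
move=> hA hB hco [N hN].
have hB0 : (B%:R : rat) != 0 by rewrite pnatr_eq0; lia.
have hA0 : (A%:R : rat) != 0 by rewrite pnatr_eq0; lia.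
set r := (A%:R / B%:R : rat) in hN *.
have r0 : 0 < r by apply: rpos; lia.
have [hAB|hBA|hAB] := ltngtP A B.
- set k := (N * A).+1.
  have hq : 1 + (A%:R : rat)^-1 <= B%:R / A%:R.
    rewrite ler_pdivlMr ?ltr0n; last lia.
    by rewrite mulrDl mul1r mulVf // -[1]/(1%:R) -natrD ler_nat; lia.
  have hk := big_ge _ A N (ltnW hA) hq; rewrite -/k in hk.
  have hNk : N%:R * r ^+ k < 1.
    have : (B%:R / A%:R) ^+ k * r ^+ k = 1.
      by rewrite -exprMn /r mulrA divfK // mulfV // expr1n.
    by move=> e; rewrite -[X in _ < X]e ltr_pM2r ?exprn_gt0.
  have a1 : is_atom r 1 by have := atom_pow A B 0 hA hB hco; rewrite expr0.
  have hs : forall a, a \in nseq (B ^ k) (r ^+ k) -> is_atom r a.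
    by move=> a; rewrite mem_nseq => /andP [_ /eqP ->]; apply: atom_pow.
  have hsum : \sum_(a <- nseq (B ^ k) (r ^+ k)) a = (A ^ k)%:R.
    by rewrite sum_nseq mulrC natrX /r (rpowB A B k (ltnW hB)).
  have [|s' [hsub [hsize hd]]] := hN 1 a1 _ hs.
    rewrite hsum; split; first exact: (inS_nat r 1).
    split; first exact: inS_nat.
    exists (A ^ k - 1)%:R; split; first exact: inS_nat.
    by rewrite natr_pred // expn_gt0; apply/orP; left; lia.
  have := dvdS_le (ltW r0) hd.
  rewrite (subseq_nseq _ _ _ hsub) sum_nseq => h1.
  have : (size s')%:R * r ^+ k <= N%:R * r ^+ k.
    by rewrite ler_pM2r ?exprn_gt0 // ler_nat.
  move=> h2; have := le_lt_trans (le_trans h1 h2) hNk; by rewrite ltxx.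
- set k := (N * B).+1.
  have hq : 1 + B%:R^-1 <= r.
    rewrite /r ler_pdivlMr ?ltr0n; last lia.
    by rewrite mulrDl mul1r mulVf // -[1]/(1%:R) -natrD ler_nat; lia.
  have hk := big_ge _ B N (ltnW hB) hq; rewrite -/k in hk.
  have a1 : is_atom r 1 by have := atom_pow A B 0 hA hB hco; rewrite expr0.
  have hs : forall a, a \in nseq (A ^ k) (1 : rat) -> is_atom r a.
    by move=> a; rewrite mem_nseq => /andP [_ /eqP ->].
  have hsum : \sum_(a <- nseq (A ^ k) (1 : rat)) a = (A ^ k)%:R by rewrite sum_nseq mulr1.
  have [|s' [hsub [hsize hd]]] := hN _ (atom_pow A B k hA hB hco) _ hs.
    rewrite hsum; split; first exact: inS_pow.
    split; first exact: inS_nat.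
    exists ((B ^ k - 1)%:R * r ^+ k); split; first exact: inS_mono.
    rewrite -{1}(mul1r (r ^+ k)) -mulrDl natr_pred ?expn_gt0; last by apply/orP; left; lia.
    by rewrite mulrC -(rpowB A B k (ltnW hB)) natrX.
  have := dvdS_le (ltW r0) hd.
  rewrite (subseq_nseq _ _ _ hsub) sum_nseq mulr1 => h1.
  have : (size s')%:R <= N%:R :> rat by rewrite ler_nat.
  move=> h2; have := lt_le_trans hk (le_trans h1 h2); by rewrite ltxx.
- by move: hco; rewrite hAB /coprime gcdnn; lia.
Qed.

Lemma one_dvd A B : (B < A)%N -> (0 < B)%N ->
  forall k, exists w, B%:R * (A%:R / B%:R) ^+ k.+1 = 1 + val (A%:R / B%:R) w.
Proof.
move=> hBA hB.
have hB0 : (B%:R : rat) != 0 by rewrite pnatr_eq0; lia.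
set r := (A%:R / B%:R : rat).
have rB : B%:R * r = A%:R by rewrite /r mulrC divfK.
elim=> [|k [w IH]].
  exists [:: (A - 1)%N]; rewrite val_cons val_nil mulr0 addr0 expr1 rB.
  by rewrite natr_pred //; lia.
exists (addseq w (mono k.+1 (A - B))).
rewrite val_add val_mono natrB ?(ltnW hBA) // addrA -IH.
by rewrite [in LHS]exprS mulrA rB; ring.
Qed.

Lemma nonint_tame A B : (2 <= A)%N -> (2 <= B)%N -> coprime A B ->
  ~ locally_tame (A%:R / B%:R).
Proof.
move=> hA hB hco hlt.
have hB0 : (B%:R : rat) != 0 by rewrite pnatr_eq0; lia.
have hA0 : (A%:R : rat) != 0 by rewrite pnatr_eq0; lia.
set r := (A%:R / B%:R : rat) in hlt *.
have r0 : 0 < r by apply: rpos; lia.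
have a1 : is_atom r 1 by have := atom_pow A B 0 hA hB hco; rewrite expr0.
have [n hn] := hlt 1 a1.
have hnn : forall z : seq rat, (forall a, a \in z -> is_atom r a) ->
    forall a, a \in z -> 0 <= a.
  by move=> z hz a ha; apply: ltW; apply: (atom_pos r a (ltW r0)); apply: hz.
have [hAB|hBA|hAB] := ltngtP A B.
- set k := (n * A).+1.
  have hq : 1 + (A%:R : rat)^-1 <= B%:R / A%:R.
    rewrite ler_pdivlMr ?ltr0n; last lia.
    by rewrite mulrDl mul1r mulVf // -[1]/(1%:R) -natrD ler_nat; lia.
  have hk := big_ge _ A n (ltnW hA) hq; rewrite -/k in hk.
  have hNk : n%:R * r ^+ k < 1.
    have : (B%:R / A%:R) ^+ k * r ^+ k = 1.
      by rewrite -exprMn /r mulrA divfK // mulfV // expr1n.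
    by move=> e; rewrite -[X in _ < X]e ltr_pM2r ?exprn_gt0.
  have hs : forall a, a \in nseq (B ^ k) (r ^+ k) -> is_atom r a.
    by move=> a; rewrite mem_nseq => /andP [_ /eqP ->]; apply: atom_pow.
  have hsum : (A ^ k)%:R = \sum_(a <- nseq (B ^ k) (r ^+ k)) a.
    by rewrite sum_nseq mulrC -(rpowB A B k (ltnW hB)) natrX.
  have hApos : (0 < A ^ k)%N by rewrite expn_gt0; apply/orP; left; lia.
  have [|z' [[hz'at hz'sum] h1 hdist]] := hn _ (inS_nat r (A ^ k)) _ _ (conj hs hsum).
    split; first exact: (inS_nat r 1).
    split; first exact: inS_nat.
    exists (A ^ k - 1)%:R; split; first exact: inS_nat.
    by rewrite natr_pred.
  have hrk1 : r ^+ k < 1.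
    rewrite exprn_ilt1 ?ltW // /r ltr_pdivrMr ?ltr0n ?mul1r ?ltr_nat //; lia.
  have hne : (1 : rat) != r ^+ k by rewrite eq_sym lt_eqF.
  have hc := sum_count_ge2 z' (r ^+ k) 1 (hnn z' hz'at) (ltW (exprn_gt0 _ r0)) h1 hne.
  rewrite -hz'sum in hc.
  set c := count_mem (r ^+ k) z' in hc.
  have hd1 := leq_trans (leq_maxl _ _) hdist.
  rewrite gcd_len_nseq' size_nseq -/c in hd1.
  have hBc : (B ^ k <= n + c)%N by lia.
  have : (A ^ k)%:R <= (n + c)%:R * r ^+ k.
    by rewrite hsum sum_nseq ler_pM2r ?exprn_gt0 // ler_nat.
  rewrite natrD mulrDl; lra.
- set k := (n + B).+1.
  have hr1 : r != 1.
    apply/eqP => h; move: h; rewrite /r => /(congr1 (fun t => t * B%:R)).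
    rewrite divfK // mul1r => /eqP; rewrite eqr_nat => /eqP; lia.
  have hs : forall a, a \in nseq B (r ^+ k) -> is_atom r a.
    by move=> a; rewrite mem_nseq => /andP [_ /eqP ->]; apply: atom_pow.
  have hsum : B%:R * r ^+ k = \sum_(a <- nseq B (r ^+ k)) a by rewrite sum_nseq.
  have [|z' [[hz'at hz'sum] h1 hdist]] := hn _ (inS_mono r k B) _ _ (conj hs hsum).
    split; first exact: (inS_nat r 1).
    split; first exact: inS_mono.
    have [w hw] := one_dvd A B hBA (ltnW hB) (n + B).
    by exists (val r w); split; [exact: inS_val | rewrite hw].
  have [d [hd1 hd2 hd3]] := fact_rep r z' r0 hr1 hz'at.
  have := len_bound A B (ltnW hB) hBA hco (n + B) d.
  rewrite hd1 -hz'sum hd2 => /(_ erefl (hd3 h1)) hlen.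
  have hd4 := leq_trans (leq_maxr _ _) hdist.
  rewrite gcd_len_nseq' in hd4.
  set g := minn _ _ in hd4.
  have hg : (g <= B)%N by apply: geq_minl.
  rewrite leq_subLR in hd4.
  have := leq_trans hlen (leq_trans hd4 (_ : g + n <= B + n)%N).
  by move=> /(_ _); rewrite leq_add2r => /(_ hg); rewrite addnC ltnn.
- by move: hco; rewrite hAB /coprime gcdnn; lia.
Qed.

Theorem theorem5p5 (r : rat) (hr : 0 < r) (hat : atomic r) :
  [<-> exists n : nat, r = n%:R;
       omega_Sr_finite r;
       globally_tame r;
       locally_tame r].
Proof.
split; first exact: int_omega.
split.
  move=> h1; case: (classic (exists n : nat, r = n%:R)) => h0; first exact: int_tame.
  have [A [B [er hA hB hco]]] := nonint_setup r hr hat h0.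
  by rewrite er in h1; case: (nonint_omega A B hA hB hco).
split; first by move=> [n hn] a ha; exists n; apply: hn.
move=> h3; case: (classic (exists n : nat, r = n%:R)) => h0 //.
have [A [B [er hA hB hco]]] := nonint_setup r hr hat h0.
by rewrite er in h3; case: (nonint_tame A B hA hB hco).
Qed.
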